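(* In the dual access model, there exists an algorithm which, on input a threshold $n\in\mathbb{N}$, $n\ge1$, and a parameter $\varepsilon>0$, and given dual access to a distribution $D$ over an arbitrary (finite) set satisfying $\min_{x\in\mathrm{supp}(D)}D(x)\ge\frac1n$, outputs with probability at least $2/3$ an estimate $\hat k$ with $|\hat k-|\mathrm{supp}(D)||\le\varepsilon n$, and has query complexity $O(1/\varepsilon^2)$.
   Context: $\mathrm{supp}(D)=\{x: D(x)>0\}$. In the dual access model, an algorithm accesses $D$ via a sampling oracle $\mathsf{SAMP}_D$ (returns $x$ with probability $D(x)$, independently of all previous calls) and an evaluation oracle $\mathsf{EVAL}_D$ (on query $x$ returns $D(x)$); each call counts as one query. *)

(* Defs.v *)
From HB Require Import structures.
From mathcomp Require Import all_boot all_order all_algebra.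
From mathcomp Require Import reals.
Set Implicit Arguments. Unset Strict Implicit. Unset Printing Implicit Defensive.
Import Order.TTheory GRing.Theory Num.Theory.
Local Open Scope ring_scope.

(* A randomized adaptive algorithm with dual access to a distribution over T,
   returning a value in R, as a (well-founded) decision tree:
   - Ret r      : halt and output r
   - Samp k     : call SAMP_D, receive x : T, continue with k x
   - Eval x k   : call EVAL_D on x, receive D(x) : R, continue with k (D x)
   - Flip k     : internal fair coin toss (free, not a query). *)
Inductive alg (T R : Type) : Type :=
| Ret : R -> alg T R
| Samp : (T -> alg T R) -> alg T R
| Eval : T -> (R -> alg T R) -> alg T R
| Flip : (bool -> alg T R) -> alg T R.

Arguments Ret {T R}.
Arguments Samp {T R}.
Arguments Eval {T R}.
Arguments Flip {T R}.

Definition is_distr (R : realType) (T : finType) (D : T -> R) : Prop :=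
  (forall x, 0 <= D x) /\ \sum_(x : T) D x = 1.

Definition supp (R : realType) (T : finType) (D : T -> R) : {set T} :=
  [set x | 0 < D x].

(* probability that the algorithm run with dual access to D outputs a value
   satisfying P (SAMP calls are independent draws from D) *)
Fixpoint prob_out (R : realType) (T : finType) (D : T -> R) (P : pred R)
    (a : alg T R) : R :=
  match a with
  | Ret r => (P r)%:R
  | Samp k => \sum_(x : T) D x * prob_out D P (k x)
  | Eval x k => prob_out D P (k (D x))
  | Flip k => (prob_out D P (k true) + prob_out D P (k false)) / 2
  end.

Fixpoint queries_le (T R : Type) (a : alg T R) (d : nat) : Prop :=
  match a with
  | Ret _ => True
  | Samp k => match d with 0 => False | d'.+1 => forall x, queries_le (k x) d' end
  | Eval _ k => match d with 0 => False | d'.+1 => forall y, queries_le (k y) d' end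
  | Flip k => forall b, queries_le (k b) d
  end.

(* Main.v *)
Require Import Defs.
From HB Require Import structures.
From mathcomp Require Import all_boot all_order all_algebra.
From mathcomp Require Import reals.
From mathcomp Require Import ring lra.
Set Implicit Arguments. Unset Strict Implicit. Unset Printing Implicit Defensive.
Import Order.TTheory GRing.Theory Num.Theory.
Local Open Scope ring_scope.

Fixpoint exp_out (R : realType) (T : finType) (D : T -> R) (g : R -> R)
    (a : alg T R) : R :=
  match a with
  | Ret r => g r
  | Samp k => \sum_(x : T) D x * exp_out D g (k x)
  | Eval x k => exp_out D g (k (D x))
  | Flip k => (exp_out D g (k true) + exp_out D g (k false)) / 2
  end.

Lemma prob_ge (R : realType) (T : finType) (D : T -> R) (P : pred R) (g : R -> R) :
  is_distr D -> (forall r, 1 - g r <= (P r)%:R) ->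
  forall a, 1 - exp_out D g a <= prob_out D P a.
Proof.
move=> [D0 D1] Hg; elim => [r|k IH|x k IH|k IH] /=.
- exact: Hg.
- rewrite -{1}D1 -sumrB; apply: ler_sum => x _.
  rewrite -{1}(mulr1 (D x)) -mulrBr; apply: ler_wpM2l; first exact: D0.
  exact: IH.
- exact: IH.
- have := IH true; have := IH false; lra.
Qed.

Fixpoint loop (R : realType) (T : finType) (m : R) (j : nat) (acc : R) : alg T R :=
  match j with
  | 0%N => Ret (acc / m)
  | j'.+1 => Samp (fun x => Eval x (fun y => loop T m j' (acc + y^-1)))
  end.

Lemma loop_queries (R : realType) (T : finType) (m : R) j acc :
  queries_le (loop T m j acc) (j.*2).
Proof.
elim: j acc => [|j IH] acc //= x y; exact: IH.
Qed.

Lemma loop_exp (R : realType) (T : finType) (D : T -> R) (m c t : R) :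
  is_distr D -> m != 0 ->
  let k := \sum_(x : T) D x * (D x)^-1 in
  let V := \sum_(x : T) D x * ((D x)^-1 - k) ^+ 2 in
  forall j acc,
  exp_out D (fun r => c * (r * m - t) ^+ 2) (loop T m j acc)
   = c * ((acc + j%:R * k - t) ^+ 2 + j%:R * V).
Proof.
move=> [D0 D1] m0 k V; elim => [|j IH] acc /=.
  by rewrite mulfVK //; ring.
set u := acc + j.+1%:R * k - t.
rewrite (eq_bigr (fun x => c * u ^+ 2 * D x + (2 * c * u) * (D x * (D x)^-1 - D x * k)
    + c * (D x * ((D x)^-1 - k) ^+ 2) + c * j%:R * V * D x)); last first.
  by move=> x _; rewrite IH /u mulrS; ring.
rewrite !big_split /= -!mulr_sumr sumrB -mulr_suml D1 -/k -/V.
rewrite /u mulrS; ring.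
Qed.

Section Facts.
Variables (R : realType) (T : finType) (D : T -> R) (n : nat).
Hypothesis HD : is_distr D.
Hypothesis n1 : (1 <= n)%N.
Hypothesis Hn : forall x, x \in supp D -> n%:R^-1 <= D x.

Lemma pt x : D x != 0 -> 1 <= n%:R * D x.
Proof.
move=> Dx; have Hs : x \in supp D by rewrite inE lt_def Dx (HD.1 x).
have := ler_wpM2l (ler0n _ n) (Hn Hs); rewrite mulfV // pnatr_eq0 -lt0n; exact.
Qed.

Lemma kE : \sum_x D x * (D x)^-1 = #|supp D|%:R.
Proof.
rewrite -sum1_card natr_sum [RHS]big_mkcond /=; apply: eq_bigr => x _.
rewrite inE; have [->|Dx] := eqVneq (D x) 0; first by rewrite mul0r ltxx.
by rewrite mulfV // lt_def Dx (HD.1 x).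
Qed.

Lemma kn : #|supp D|%:R <= n%:R :> R.
Proof.
rewrite -kE; apply: (@le_trans _ _ (\sum_x n%:R * D x)); last first.
  by rewrite -mulr_sumr HD.2 mulr1.
apply: ler_sum => x _.
have [->|Dx] := eqVneq (D x) 0; first by rewrite !(mul0r, mulr0).
rewrite mulfV //; exact: pt.
Qed.

Lemma Vle : \sum_x D x * ((D x)^-1 - #|supp D|%:R) ^+ 2 <= n%:R ^+ 2.
Proof.
set k := (#|supp D|%:R : R).
rewrite (eq_bigr (fun x => D x * (D x)^-1 ^+ 2 - 2 * k * (D x * (D x)^-1) + k ^+ 2 * D x));
  last by move=> x _; ring.
rewrite !big_split /= sumrN -!mulr_sumr kE HD.2 -/k.
have -> : forall a : R, a - 2 * k * k + k ^+ 2 * 1 = a - k ^+ 2 by move=> a; ring.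
suff H1 : \sum_x D x * (D x)^-1 ^+ 2 <= n%:R ^+ 2.
  have : 0 <= k ^+ 2 by apply: sqr_ge0.
  lra.
apply: (@le_trans _ _ (\sum_x n%:R ^+ 2 * D x)); last first.
  by rewrite -mulr_sumr HD.2 mulr1.
apply: ler_sum => x _.
have [->|Dx] := eqVneq (D x) 0; first by rewrite !(mul0r, mulr0).
have h1 := pt Dx.
have h2 : 0 < D x by rewrite lt_def Dx (HD.1 x).
have h3 : D x * (D x)^-1 = 1 by rewrite mulfV.
have h4 : 0 <= n%:R :> R by [].
set y := (D x)^-1 in h3 *; set z := D x in h1 h2 h3 *; set N := n%:R in h1 h4 *.
nra.
Qed.
End Facts.

Theorem theorem14 (R : realType) :
  exists (A : nat -> R -> forall T : finType, alg T R) (C : R),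
    0 < C /\
    forall (n : nat) (eps : R), (1 <= n)%N -> 0 < eps ->
      (forall T : finType, exists d : nat,
          d%:R <= C / eps ^+ 2 /\ queries_le (A n eps T) d) /\
      (forall (T : finType) (D : T -> R),
          is_distr D ->
          (forall x, x \in supp D -> n%:R^-1 <= D x) ->
          2 / 3 <= prob_out D
                     (fun k => `|k - (#|supp D|)%:R| <= eps * n%:R)
                     (A n eps T)).
Proof.
exists (fun n eps T => if eps < 1
  then loop T (Num.truncn (4 / eps ^+ 2))%:R (Num.truncn (4 / eps ^+ 2)) 0
  else Ret 0), 8.
split; first lra.
move=> n eps n1 e0.
set m := Num.truncn (4 / eps ^+ 2).
have e2 : 0 < eps ^+ 2 by apply: exprn_gt0.
have mle : m%:R <= 4 / eps ^+ 2.
  by rewrite /m truncn_le divr_ge0 // ltW.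
have mgt : 4 / eps ^+ 2 < m.+1%:R by rewrite /m truncnS_gt.
split.
  move=> T; case: ifP => H.
    exists m.*2; split; last exact: loop_queries.
    rewrite -muln2 natrM.
    have -> : 8 / eps ^+ 2 = 4 / eps ^+ 2 * 2 by rewrite mulrAC; congr (_ / _); ring.
    rewrite ler_pM2r //.
  exists 0%N; split => //; apply: divr_ge0 => //; exact: ltW.
move=> T D HD Hn.
have kn := kn HD n1 Hn.
case: ifP => H; last first.
  have Hk : #|supp D|%:R <= eps * n%:R.
    apply: le_trans kn _; rewrite ler_peMl //; by rewrite leNgt H.
  rewrite /= sub0r normrN ger0_norm // Hk (_ : true%:R = 1 :> R) //; lra.
set k := (#|supp D|%:R : R).
have w1 : 1 < (eps ^+ 2)^-1 by rewrite invf_gt1 // expr_lt1 // ltW.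
have m3 : 3 <= m%:R * eps ^+ 2.
  rewrite -ler_pdivrMr //; move: mgt; rewrite mulrS; lra.
have m0 : 0 < m%:R :> R.
  have : 0 < eps ^+ 2 by [].
  have : 0 <= m%:R :> R by [].
  nra.
have n0 : 0 < n%:R :> R by rewrite ltr0n.
set Q := (m%:R * eps * n%:R) ^+ 2.
have Q0 : 0 < Q by rewrite /Q exprn_gt0 // !mulr_gt0.
have Hg : forall r, 1 - Q^-1 * (r * m%:R - m%:R * k) ^+ 2 <=
    ((`|r - k| <= eps * n%:R)%R)%:R.
  move=> r; have g0 : 0 <= Q^-1 * (r * m%:R - m%:R * k) ^+ 2.
    by rewrite mulr_ge0 // ?invr_ge0 ?sqr_ge0 // ltW.
  case: (leP `|r - k| (eps * n%:R)) => hr; first by rewrite (_ : true%:R = 1 :> R) //; lra.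
  rewrite (_ : false%:R = 0 :> R) // subr_le0 mulrC ler_pdivlMr // mul1r.
  have hq : Q = m%:R ^+ 2 * (eps * n%:R) ^+ 2 by rewrite /Q; ring.
  have hs : (r * m%:R - m%:R * k) ^+ 2 = m%:R ^+ 2 * `|r - k| ^+ 2.
    by rewrite real_normK ?num_real //; ring.
  rewrite hq hs ler_pM2l ?exprn_gt0 //.
  apply: ltW; rewrite ltr_pXn2r // ?nnegrE ?normr_ge0 //.
  by rewrite mulr_ge0 // ltW.
apply: le_trans (prob_ge HD Hg (loop T m%:R m 0)).
rewrite loop_exp // ?lt0r_neq0 // kE // -/k add0r subrr expr0n /= add0r.
have Vl := Vle HD n1 Hn; rewrite -/k in Vl.
set V := \sum_x _ in Vl *.
rewrite lerBrDr -lerBrDl mulrC ler_pdivrMr // /Q.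
have : 3 * (m%:R * V) <= 3 * (m%:R * n%:R ^+ 2).
  by rewrite ler_pM2l // ler_pM2l.
have : 3 * (m%:R * n%:R ^+ 2) <= (m%:R * eps ^+ 2) * (m%:R * n%:R ^+ 2).
  by rewrite ler_pM2r // mulr_gt0 // exprn_gt0.
move=> h1 h2; rewrite (_ : (m%:R * eps * n%:R) ^+ 2 = (m%:R * eps ^+ 2) * (m%:R * n%:R ^+ 2)); last by ring.
lra.
Qed.
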